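(* Let $m=2^l$ with $l>0$. If $\mathbf{u}\in K(\mathbb{Z}_m^3)$, then $D^2(\mathbf{u})=H(\mathbf{u})$.
   Context: The Ducci function $D:\mathbb{Z}_m^3\to\mathbb{Z}_m^3$ is $D(x_1,x_2,x_3)=(x_1+x_2,\,x_2+x_3,\,x_3+x_1)$, entries mod $m$. $H:\mathbb{Z}_m^3\to\mathbb{Z}_m^3$ is the shift $H(x_1,x_2,x_3)=(x_2,x_3,x_1)$. $K(\mathbb{Z}_m^3)$ is the set of $\mathbf{u}$ lying in the Ducci cycle of some tuple, i.e. with $D^k(\mathbf{u})=\mathbf{u}$ for some $k\ge1$. *)

(* Defs.v *)
From mathcomp Require Import all_boot all_algebra.
Set Implicit Arguments. Unset Strict Implicit. Unset Printing Implicit Defensive.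
Import GRing.Theory.
Local Open Scope ring_scope.

Definition tup3 (m : nat) := ('Z_m * 'Z_m * 'Z_m)%type.

Definition ducci (m : nat) (u : tup3 m) : tup3 m :=
  let: (x1, x2, x3) := u in (x1 + x2, x2 + x3, x3 + x1).

Definition shiftH (m : nat) (u : tup3 m) : tup3 m :=
  let: (x1, x2, x3) := u in (x2, x3, x1).

Definition in_K (m : nat) (u : tup3 m) : Prop :=
  exists k : nat, (1 <= k)%N /\ iter k (@ducci m) u = u.

(* Main.v *)
Require Import Defs.
From mathcomp Require Import all_boot all_algebra.
From mathcomp Require Import ring.
Set Implicit Arguments.
Import GRing.Theory.
Local Open Scope ring_scope.

Definition s3 (m : nat) (u : tup3 m) : 'Z_m :=
  let: (x1, x2, x3) := u in x1 + x2 + x3.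

Lemma s3_iter (m : nat) (u : tup3 m) k :
  s3 (iter k (@ducci m) u) = 2 ^+ k * s3 u.
Proof.
elim: k => [|k IH]; first by rewrite expr0 mul1r.
rewrite iterS exprS -mulrA -IH; case: (iter k _ u) => [[a b] c] /=; ring.
Qed.

Theorem lemma4p2 (l : nat) (hl : (0 < l)%N) (u : tup3 (2 ^ l)) :
  in_K u -> iter 2 (@ducci (2 ^ l)) u = shiftH u.
Proof.
move=> [k [hk hit]].
have hs : s3 u = 0.
  have e1 : s3 u = 2 ^+ k * s3 u by rewrite -{1}hit s3_iter.
  have ej : forall j, s3 u = (2 ^+ k) ^+ j * s3 u.
    elim=> [|j IH]; first by rewrite expr0 mul1r.
    by rewrite exprSr -mulrA -e1.
  rewrite (ej l) -exprM.
  have -> : (k * l = l + (k * l - l))%N.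
    by rewrite subnKC // leq_pmull.
  rewrite exprD.
  have h2 : (2 : 'Z_(2 ^ l)) ^+ l = 0.
    rewrite -natrX pchar_Zp //.
    have : (2 ^ 1 <= 2 ^ l)%N by rewrite leq_exp2l.
    by [].
  by rewrite h2 !mul0r.
clear hit; move: hs; case: u => [[x y] z] /= hs.
have hz : z = - x - y by apply/eqP; rewrite -subr_eq0 -hs; apply/eqP; ring.
subst z; congr (_, _, _); ring.
Qed.
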